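(* Let $(\rho,\mu,\nu)$ be a regular triple of standard representations of $\mathcal{W}_N$ and $a,c\in\mathbb{Z}/N$. Then, as $N^2\times N^2$ matrices, $$R(\rho,\mu,\nu|a,c)=(y_{\rho\mu}y_{\mu\nu})^P\,\omega^{ac/2}\;Y_1^{-a}Z_1^{-c}\,R(\rho,\mu,\nu)\,Z_1^{c}Z_2^{-a},$$ where $Y_1=Y\otimes\mathrm{id}$, $Z_1=Z\otimes\mathrm{id}$, $Z_2=\mathrm{id}\otimes Z$.
   Context: $N\ge3$ odd, $N=2P+1$, $\omega=e^{2\pi i/N}$; for integers $r,s$ with $s$ invertible mod $N$, $\omega^{r/s}:=\omega^{rs'}$, $ss'\equiv1\pmod N$ (so $\omega^{1/2}=\omega^{P+1}$). Indices run over $\mathbb{Z}/N$; $\delta(n)=1$ if $n\equiv0\pmod N$, else $0$. $X,Z,Y$ are the $N\times N$ matrices $X_{ij}=\delta(i-j-1)$, $Z_{ij}=\omega^i\delta(i-j)$, $Y=\omega^{1/2}XZ$, i.e. $Y_{ij}=\omega^{1/2+j}\delta(i-j-1)$. $\mathcal{W}_N$: unital $\mathbb{C}$-algebra generated by $E,E^{-1},D$ with $EE^{-1}=E^{-1}E=1$, $ED=\omega DE$, $\Delta(E)=E\otimes E$, $\Delta(D)=E\otimes D+D\otimes1$; tensor products via $\Delta$; cyclic = $E,D$ act invertibly; regular = every tensor product of consecutive terms cyclic. The standard representation with parameters $(a_\rho,y_\rho)\in(\mathbb{C}^* )^2$ is $\rho(E)=a_\rho^2Z$, $\rho(D)=a_\rho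 y_\rho X$. A determination $u\mapsto u^{1/N}$ of the $N$-th root is fixed; $\rho\mu$ has $a_{\rho\mu}=a_\rho a_\mu$, $y_{\rho\mu}=(a_\rho^Ny_\mu^N+y_\rho^Na_\mu^{-N})^{1/N}$; products are associative. Standing convention: $-\frac{y_\rho y_\nu}{y_{\rho\mu\nu}y_\mu}=r\big(\frac{y_{\rho\mu}y_{\mu\nu}}{y_{\rho\mu\nu}y_\mu}\big)$. Functions: for $x^N+y^N=z^N$, $\omega(x,y,z|n)=\prod_{j=1}^n\frac{y}{z-x\omega^j}$ ($0\le n\le N-1$), extended $N$-periodically; $\omega(x,y,z|m,n)=\omega(x,y,z|m-n)\omega^{n^2/2}$. $g(x)=\prod_{j=1}^{N-1}(1-x\omega^j)^{j/N}$, $r(x)=(1-x^N)^{1/N}$ (analytic continuations from $0$ to $\mathbb{C}\setminus\{|x|\ge1,\arg x\in\theta+\frac{2\pi}{N}\mathbb{Z}\}$, $\theta$ fixed so $g$ avoids the cuts); $h(x)=x^{-P}g(x)/g(1)$. $R(\rho,\mu,\nu)^{\gamma,\delta}_{\alpha,\beta}=h\big(\frac{y_{\rho\mu}y_{\mu\nu}}{y_{\rho\mu\nu}y_\mu}\big)\omega^{\alpha\delta}\omega(y_{\rho\mu\nu}y_\mu,y_\rho y_\nu,y_{\rho\mu}y_{\mu\nu}|\gamma,\alpha)\delta(\gamma+\delta-\beta)$; $R(\rho,\mu,\nu|a,c)^{\gamma,\delta}_{\alpha,\beta}=(y_{\rho\mu}y_{\mu\nu})^P\omega^{c(\gamma-\alpha)-ac/2}R(\rho,\mu,\nu)^{\gamma-a,\delta}_{\alpha,\beta-a}$.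 Matrix convention: an array $M^{\gamma,\delta}_{\alpha,\beta}$ is the $N^2\times N^2$ matrix with entry $M^{\gamma,\delta}_{\alpha,\beta}$ in row $(\alpha,\beta)$ and column $(\gamma,\delta)$; $A\otimes B$ has entry $A_{\alpha\gamma}B_{\beta\delta}$ in row $(\alpha,\beta)$, column $(\gamma,\delta)$; products are matrix products. *)

(* Defs.v *)
From mathcomp Require Import all_boot all_order all_algebra.
From mathcomp Require Export complex mxtens.
From mathcomp Require Import reals trigo.
Set Implicit Arguments. Unset Strict Implicit. Unset Printing Implicit Defensive.
Import Order.TTheory GRing.Theory Num.Theory.
Local Open Scope ring_scope.

Section Defs.
Variable R : realType.
Local Notation C := (R[i]).
Variable N : nat.

(* P with N = 2P+1 *)
Definition Phalf : nat := N./2.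

Definition omega : C := Complex (cos (2 * pi / N%:R)) (sin (2 * pi / N%:R)).

Definition wpow (k : int) : C := omega ^ k.

(* omega^{k/2} := omega^{k s'} with s' = P+1 the inverse of 2 mod N *)
Definition whalf (k : int) : C := omega ^ (k * (Phalf.+1)%:Z).

Definition delta (n : int) : C := if (N%:Z %| n)%Z then 1 else 0.

Definition ii (i : 'I_N) : int := (nat_of_ord i)%:Z.

Definition Xm : 'M[C]_N := \matrix_(i, j) delta (ii i - ii j - 1).
Definition Zm : 'M[C]_N := \matrix_(i, j) (wpow (ii i) * delta (ii i - ii j)).
Definition Ym : 'M[C]_N := whalf 1 *: (Xm *m Zm).

(* a representation of W_N on C^n: images of E and D *)
Definition rep (n : nat) := ('M[C]_n * 'M[C]_n)%type.

Definition std_rep (a y : C) : rep N := (a ^+ 2 *: Zm, (a * y) *: Xm).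

Definition tens_rep n m (r : rep n) (s : rep m) : rep (n * m) :=
  (r.1 *t s.1, r.1 *t s.2 + r.2 *t (1%:M : 'M[C]_m)).

Definition cyclic_rep n (r : rep n) : Prop := r.1 \in unitmx /\ r.2 \in unitmx.

Definition regular_triple (ar yr am ym an yn : C) : Prop :=
  let rho := std_rep ar yr in let mu := std_rep am ym in let nu := std_rep an yn in
  cyclic_rep rho /\ cyclic_rep mu /\ cyclic_rep nu /\
  cyclic_rep (tens_rep rho mu) /\ cyclic_rep (tens_rep mu nu) /\
  cyclic_rep (tens_rep (tens_rep rho mu) nu).

(* parameters of a product rho mu, given the fixed determination rt of u^{1/N} *)
Definition a_prod (ar am : C) : C := ar * am.
Definition y_prod (rt : C -> C) (ar yr am ym : C) : C :=
  rt (ar ^+ N * ym ^+ N + yr ^+ N * am ^- N).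

Definition omf (x y z : C) (n : int) : C :=
  \prod_(1 <= j < (absz (n %% N%:Z)%Z).+1) (y / (z - x * omega ^+ j)).
Definition omf2 (x y z : C) (m n : int) : C := omf x y z (m - n) * whalf (n ^+ 2).

Definition hfun (g : C -> C) (x : C) : C := x ^- Phalf * g x / g 1.

(* R(rho,mu,nu)^{gam,del}_{alp,bet}, arguments in order alp bet gam del *)
Definition Rarr (g : C -> C) (yr ym yn yrm ymn yrmn : C) (alp bet gam del : int) : C :=
  hfun g ((yrm * ymn) / (yrmn * ym)) * wpow (alp * del)
  * omf2 (yrmn * ym) (yr * yn) (yrm * ymn) gam alp * delta (gam + del - bet).

Definition Rarr_ac (g : C -> C) (yr ym yn yrm ymn yrmn : C) (a c : int)
  (alp bet gam del : int) : C :=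
  (yrm * ymn) ^+ Phalf * (wpow (c * (gam - alp)) * whalf (- (a * c)))
  * Rarr g yr ym yn yrm ymn yrmn alp (bet - a) (gam - a) del.

(* the N^2 x N^2 matrix with entry M^{gam,del}_{alp,bet} in row (alp,bet), column (gam,del) *)
Definition arr2mx (F : int -> int -> int -> int -> C) : 'M[C]_(N * N) :=
  \matrix_(i, j) F (ii (mxtens_unindex i).1) (ii (mxtens_unindex i).2)
                   (ii (mxtens_unindex j).1) (ii (mxtens_unindex j).2).

End Defs.

(* Main.v *)
Require Import Defs.
From mathcomp Require Import all_boot all_order all_algebra.
From mathcomp Require Import complex mxtens.
From mathcomp Require Import reals trigo.
From mathcomp Require Import ring.
Import Order.TTheory GRing.Theory Num.Theory.
Local Open Scope ring_scope.
Set Implicit Arguments. Unset Strict Implicit.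


Lemma omega_pow (R : realType) (N : nat) k :
  omega R N ^+ k = Complex (cos ((2 * pi / N%:R) *+ k)) (sin ((2 * pi / N%:R) *+ k)).
Proof.
elim: k => [|k IH]; first by rewrite expr0 !mulr0n cos0 sin0.
rewrite exprS IH /omega. set x := 2 * pi / _. rewrite mulrS cosD sinD.
rewrite {1}/GRing.mul /=. by congr Complex; rewrite addrC.
Qed.

Lemma omegaN (R : realType) (N : nat) (N0 : (0 < N)%N) : omega R N ^+ N = 1.
Proof.
rewrite omega_pow -mulr_natr divfK; last by rewrite pnatr_eq0 -lt0n.
by rewrite mulr_natl cos2pi sin2pi.
Qed.

Lemma omega_neq0 (R : realType) (N : nat) (N0 : (0 < N)%N) : omega R N != 0.
Proof.
apply/negP => /eqP H; move: (@omegaN R N N0); rewrite H expr0n eqn0Ngt N0 /=.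
by move/eqP; rewrite eq_sym oner_eq0.
Qed.

Lemma wpow_periodic (R : realType) (N : nat) (N0 : (0 < N)%N) (m n : int) :
  (N%:Z %| m - n)%Z -> wpow R N m = wpow R N n.
Proof.
case/dvdzP => q Hq. have -> : m = n + q * N%:Z by rewrite -Hq; ring.
rewrite /wpow expfzDr ?omega_neq0 // [q * _]mulrC -exprz_exp.
have -> : omega R N ^ (N%:Z) = 1 by exact: omegaN.
by rewrite exp1rz mulr1.
Qed.

Lemma wpowD (R : realType) (N : nat) (N0 : (0 < N)%N) (m n : int) :
  wpow R N m * wpow R N n = wpow R N (m + n).
Proof. by rewrite /wpow expfzDr ?omega_neq0. Qed.

Lemma ordz_proof (N : nat) (N0 : (0 < N)%N) (x : int) : (absz (x %% N%:Z)%Z < N)%N.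
Proof.
have N0' : (N%:Z != 0) by rewrite eqz_nat -lt0n.
rewrite -ltz_nat gez0_abs ?modz_ge0 //; apply: ltz_pmod; by rewrite ltz_nat.
Qed.

Definition ordz (N : nat) (N0 : (0 < N)%N) (x : int) : 'I_N := Ordinal (ordz_proof N0 x).

Lemma ii_ordz (N : nat) (N0 : (0 < N)%N) (x : int) : ii (ordz N0 x) = (x %% N%:Z)%Z.
Proof. by rewrite /ii /= gez0_abs // modz_ge0 // eqz_nat -lt0n. Qed.

Lemma ordz_eqE (N : nat) (N0 : (0 < N)%N) (x y : int) :
  (ordz N0 x == ordz N0 y) = (N%:Z %| x - y)%Z.
Proof.
rewrite -eqz_mod_dvd -(inj_eq val_inj) -eqz_nat.
by rewrite -!/(ii _) !ii_ordz.
Qed.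

Lemma ordz_ii (N : nat) (N0 : (0 < N)%N) (i : 'I_N) : ordz N0 (ii i) = i.
Proof.
apply: val_inj => /=; rewrite modz_small //= ?ltz_nat //.
Qed.

Lemma dvd_ii (N : nat) (N0 : (0 < N)%N) (l : 'I_N) (x : int) :
  (N%:Z %| ii l - x)%Z = (l == ordz N0 x).
Proof. by rewrite -ordz_eqE ordz_ii. Qed.

Lemma delta_ii (R : realType) (N : nat) (N0 : (0 < N)%N) (l : 'I_N) (x : int) :
  delta R N (ii l - x) = (l == ordz N0 x)%:R.
Proof. by rewrite /delta (dvd_ii N0); case: eqP. Qed.

Lemma ordz_eq (N : nat) (N0 : (0 < N)%N) (x y : int) :
  (N%:Z %| x - y)%Z -> ordz N0 x = ordz N0 y.
Proof. by rewrite -ordz_eqE => /eqP. Qed.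

Lemma dvd_modz (N : nat) (x : int) : (N%:Z %| (x %% N%:Z)%Z - x)%Z.
Proof. by rewrite -eqz_mod_dvd modz_mod. Qed.

Lemma mono_l (R : pzRingType) n (A M : 'M[R]_n) (c : 'I_n -> R) (p : 'I_n -> 'I_n) :
  (forall i j, A i j = c i * (j == p i)%:R) -> forall i j, (A *m M) i j = c i * M (p i) j.
Proof.
move=> HA i j; rewrite mxE (bigD1 (p i)) //= big1 ?addr0; first by rewrite HA eqxx mulr1.
by move=> k /negbTE Hk; rewrite HA Hk mulr0 mul0r.
Qed.

Lemma mono_r (R : pzRingType) n (A M : 'M[R]_n) (c : 'I_n -> R) (q : 'I_n -> 'I_n) :
  (forall i j, A i j = c j * (i == q j)%:R) -> forall i j, (M *m A) i j = M i (q j) * c j.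
Proof.
move=> HA i j; rewrite mxE (bigD1 (q j)) //= big1 ?addr0; first by rewrite HA eqxx mulr1.
by move=> k /negbTE Hk; rewrite HA Hk mulr0 mulr0.
Qed.

Lemma inv_from_left (R : comUnitRingType) n (A B : 'M[R]_n) :
  B *m A = 1%:M -> invmx A = B.
Proof.
move=> H; have [_ uA] := mulmx1_unit H.
by rewrite -[B]mulmx1 -(mulmxV uA) mulmxA H mul1mx.
Qed.

Lemma wpow0 (R : realType) (N : nat) : wpow R N 0 = 1.
Proof. by rewrite /wpow expr0z. Qed.

Lemma h2 (N : nat) (oddN : odd N) : (2 * ((Phalf N).+1)%:Z = N%:Z + 1)%R.
Proof.
have := odd_double_half N; rewrite oddN /Phalf => H.
rewrite -{2}H -muln2 !PoszD PoszM /=; ring.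
Qed.

Lemma Zm_l (R : realType) (N : nat) (N0 : (0 < N)%N) i j :
  Zm R N i j = wpow R N (ii i) * (j == i)%:R.
Proof. by rewrite mxE (delta_ii _ N0) ordz_ii eq_sym. Qed.

Lemma Zm_r (R : realType) (N : nat) (N0 : (0 < N)%N) i j :
  Zm R N i j = wpow R N (ii j) * (i == j)%:R.
Proof. by rewrite (Zm_l _ N0) eq_sym; case: eqP => [->|]; rewrite ?mulr0. Qed.

Lemma id_l (R : realType) (N : nat) (i j : 'I_N) :
  (1%:M : 'M[R[i]]_N) i j = 1 * (j == i)%:R.
Proof. by rewrite mxE mul1r eq_sym. Qed.

Lemma Zpow_l (R : realType) (N : nat) (N0 : (0 < N)%N) (k : nat) i j :
  (Zm R N ^+ k) i j = wpow R N (ii i * k%:Z) * (j == i)%:R.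
Proof.
elim: k i j => [|k IH] i j.
  rewrite expr0 mulr0 wpow0 mul1r. by rewrite mxE eq_sym.
rewrite exprS -mulmxE (mono_l _ (Zm_l _ N0)) IH mulrA (wpowD _ N0).
by congr (wpow _ _ _ * _); rewrite intS; ring.
Qed.

Definition Zi (R : realType) (N : nat) (c : int) : 'M[R[i]]_N :=
  \matrix_(i, j) (wpow R N (- (ii i * c)) * (j == i)%:R).

Lemma Zi_l (R : realType) (N : nat) (c : int) (i j : 'I_N) :
  Zi R N c i j = wpow R N (- (ii i * c)) * (j == i)%:R.
Proof. by rewrite mxE. Qed.

Lemma invZ (R : realType) (N : nat) (N0 : (0 < N)%N) (k : nat) :
  invmx (Zm R N ^+ k) = Zi R N k%:Z.
Proof.
apply: inv_from_left; apply/matrixP => i j.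
rewrite (mono_l _ (@Zi_l R N _)) (Zpow_l _ N0) mulrA (wpowD _ N0) addNr wpow0 mul1r.
by rewrite mxE eq_sym.
Qed.

Lemma Xm_r (R : realType) (N : nat) (N0 : (0 < N)%N) i j :
  Xm R N i j = 1 * (i == ordz N0 (ii j + 1))%:R.
Proof. by rewrite mxE -addrA -opprD (delta_ii _ N0) mul1r. Qed.

Lemma Ym_r (R : realType) (N : nat) (N0 : (0 < N)%N) i j :
  Ym R N i j = (whalf R N 1 * wpow R N (ii j)) * (i == ordz N0 (ii j + 1))%:R.
Proof.
rewrite mxE (mono_r _ (Zm_r _ N0)) (Xm_r _ N0).
by rewrite mul1r mulrA mulrAC.
Qed.

Lemma whalfE (R : realType) (N : nat) (x : int) :
  whalf R N x = wpow R N (x * (Phalf N).+1%:Z).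
Proof. by []. Qed.

Lemma modzE' (N : nat) (x : int) : (x %% N%:Z)%Z = x - (x %/ N%:Z)%Z * N%:Z.
Proof. by rewrite {2}(divz_eq x N%:Z); ring. Qed.

Lemma N_h (N : nat) (oddN : odd N) : N%:Z = 2 * ((Phalf N).+1)%:Z - 1.
Proof. by rewrite h2 //; ring. Qed.

Lemma wpow_ordz (R : realType) (N : nat) (N0 : (0 < N)%N) (m x : int) :
  wpow R N (m * ii (ordz N0 x)) = wpow R N (m * x).
Proof.
apply: (wpow_periodic _ N0); apply/dvdzP; exists (- (m * (x %/ N%:Z)%Z)).
by rewrite ii_ordz modzE'; ring.
Qed.

Lemma whalf_ordz (R : realType) (N : nat) (oddN : odd N) (N0 : (0 < N)%N) (x : int) :
  whalf R N (ii (ordz N0 x) ^+ 2) = whalf R N (x ^+ 2).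
Proof.
rewrite !whalfE; apply: (wpow_periodic _ N0); apply/dvdzP.
set q := (x %/ N%:Z)%Z; set h := ((Phalf N).+1)%:Z.
exists ((q * q * N%:Z - 2 * x * q) * h).
by rewrite ii_ordz modzE' -/q; ring.
Qed.

Lemma Ypow_r (R : realType) (N : nat) (oddN : odd N) (N0 : (0 < N)%N) (k : nat) i j :
  (Ym R N ^+ k) i j = (whalf R N (k%:Z * k%:Z) * wpow R N (k%:Z * ii j))
     * (i == ordz N0 (ii j + k%:Z))%:R.
Proof.
elim: k i j => [|k IH] i j.
  rewrite expr0 mul0r addr0 ordz_ii whalfE !mul0r wpow0 mul1r mxE mul1r; reflexivity.
rewrite exprSr -mulmxE (mono_r _ (Ym_r _ N0)) IH.
rewrite ii_ordz (@ordz_eq _ N0 (((ii j + 1) %% N%:Z)%Z + k%:Z) (ii j + k.+1%:Z)); last first.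
  have -> : (((ii j + 1) %% N%:Z)%Z + k%:Z - (ii j + k.+1%:Z) = ((ii j + 1) %% N%:Z)%Z - (ii j + 1))%R.
    by rewrite intS; ring.
  exact: dvd_modz.
rewrite -ii_ordz (wpow_ordz _ N0) !whalfE.
set X := (_ == _)%:R.
have -> : forall a b c d : R[i], a * b * X * (c * d) = a * b * (c * d) * X.
  by move=> *; ring.
congr (_ * _); rewrite !(wpowD _ N0); apply: (wpow_periodic _ N0); apply/dvdzP.
exists (- k%:Z). rewrite intS (N_h oddN). ring.
Qed.

Definition Yi (R : realType) (N : nat) (N0 : (0 < N)%N) (a : int) : 'M[R[i]]_N :=
  \matrix_(i, j) ((wpow R N (- (a * ii i)) * whalf R N (- (a * a)))
                   * (j == ordz N0 (ii i + a))%:R).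

Lemma Yi_l (R : realType) (N : nat) (N0 : (0 < N)%N) (a : int) (i j : 'I_N) :
  Yi R N0 a i j = (wpow R N (- (a * ii i)) * whalf R N (- (a * a)))
                   * (j == ordz N0 (ii i + a))%:R.
Proof. by rewrite mxE. Qed.

Lemma invY (R : realType) (N : nat) (oddN : odd N) (N0 : (0 < N)%N) (k : nat) :
  invmx (Ym R N ^+ k) = Yi R N0 k%:Z.
Proof.
apply: inv_from_left; apply/matrixP => i j.
rewrite (mono_l _ (@Yi_l R N N0 _)) (Ypow_r _ oddN N0) ordz_eqE.
have -> : (ii i + k%:Z - (ii j + k%:Z) = ii i - ii j)%R by ring.
rewrite (dvd_ii N0) ordz_ii mxE.
case: eqP => [->|_]; last by rewrite !mulr0.
rewrite !mulr1 !whalfE !(wpowD _ N0).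
by rewrite (_ : _ + _ = 0) ?wpow0 //; ring.
Qed.

Lemma eq_index (N : nat) (l : 'I_(N * N)) (x y : 'I_N) :
  (l == mxtens_index (x, y)) = ((mxtens_unindex l).1 == x) && ((mxtens_unindex l).2 == y).
Proof.
rewrite -{1}[l]mxtens_unindexK (inj_eq (can_inj (@mxtens_indexK N N))).
by case: (mxtens_unindex l).
Qed.

Lemma eq_unindex (N : nat) (l k : 'I_(N * N)) :
  (l == k) = ((mxtens_unindex l).1 == (mxtens_unindex k).1)
             && ((mxtens_unindex l).2 == (mxtens_unindex k).2).
Proof.
rewrite -{1}[k]mxtens_unindexK eq_index.
by [].
Qed.

Lemma mulb2 (T : pzRingType) (u : T) (b1 b2 : bool) :
  u * b1%:R * b2%:R = u * (b1 && b2)%:R.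
Proof. by case: b1; case: b2; rewrite /= ?mulr1 ?mulr0 ?mul0r. Qed.

Lemma T1_l (R : realType) (N : nat) (N0 : (0 < N)%N) (a : int) (k l : 'I_(N * N)) :
  (Yi R N0 a *t (1%:M : 'M[R[i]]_N)) k l =
  (wpow R N (- (a * ii (mxtens_unindex k).1)) * whalf R N (- (a * a)))
  * (l == mxtens_index (ordz N0 (ii (mxtens_unindex k).1 + a), (mxtens_unindex k).2))%:R.
Proof.
rewrite mxE Yi_l mxE eq_index mulb2 [(mxtens_unindex k).2 == _]eq_sym //.
Qed.

Lemma T2_l (R : realType) (N : nat) (c : int) (k l : 'I_(N * N)) :
  (Zi R N c *t (1%:M : 'M[R[i]]_N)) k l =
  wpow R N (- (ii (mxtens_unindex k).1 * c)) * (l == k)%:R.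
Proof.
by rewrite mxE Zi_l mxE eq_unindex mulb2 [(mxtens_unindex k).2 == _]eq_sym.
Qed.

Lemma T4_r (R : realType) (N : nat) (N0 : (0 < N)%N) (c : nat) (k l : 'I_(N * N)) :
  (Zm R N ^+ c *t (1%:M : 'M[R[i]]_N)) k l =
  wpow R N (ii (mxtens_unindex l).1 * c%:Z) * (k == l)%:R.
Proof.
rewrite mxE (Zpow_l _ N0) mxE eq_unindex mulb2 [(mxtens_unindex l).1 == _]eq_sym.
by case: eqP => [->|] //=; rewrite !mulr0.
Qed.

Lemma T5_r (R : realType) (N : nat) (c : int) (k l : 'I_(N * N)) :
  ((1%:M : 'M[R[i]]_N) *t Zi R N c) k l =
  wpow R N (- (ii (mxtens_unindex l).2 * c)) * (k == l)%:R.
Proof.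
rewrite mxE Zi_l mxE eq_unindex mulrCA mulrC [(mxtens_unindex l).2 == _]eq_sym -mulb2.
case: ((mxtens_unindex k).2 =P (mxtens_unindex l).2) => [->|_]; last by rewrite !mulr0 mul0r.
by rewrite mulrC mulrA.
Qed.
Unset Implicit Arguments.

Lemma omf_per (R : realType) (N : nat) (x y z : R[i]) (n m : int) :
  (N%:Z %| n - m)%Z -> @omf R N x y z n = @omf R N x y z m.
Proof. by rewrite -eqz_mod_dvd => /eqP H; rewrite /omf H. Qed.

Theorem lemma6p8 (R : realType) (N : nat) (oddN : odd N) (N3 : (3 <= N)%N)
  (rt : R[i] -> R[i]) (rtN : forall u : R[i], rt u ^+ N = u)
  (r : R[i] -> R[i]) (rN : forall x : R[i], r x ^+ N = 1 - x ^+ N)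
  (g : R[i] -> R[i])
  (ar yr am ym an yn : R[i])
  (ar0 : ar != 0) (yr0 : yr != 0) (am0 : am != 0) (ym0 : ym != 0)
  (an0 : an != 0) (yn0 : yn != 0)
  (reg : regular_triple N ar yr am ym an yn)
  (a c : 'I_N) :
  let yrm := y_prod N rt ar yr am ym in
  let ymn := y_prod N rt am ym an yn in
  let yrmn := y_prod N rt (a_prod ar am) yrm an yn in
  - (yr * yn) / (yrmn * ym) = r ((yrm * ymn) / (yrmn * ym)) ->
  arr2mx N (Rarr_ac N g yr ym yn yrm ymn yrmn (ii a) (ii c))
  = ((yrm * ymn) ^+ Phalf N * whalf R N (ii a * ii c)) *:
    ((invmx (Ym R N ^+ a) *t (1%:M : 'M[R[i]]_N))
     *m (invmx (Zm R N ^+ c) *t (1%:M : 'M[R[i]]_N))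
     *m arr2mx N (Rarr N g yr ym yn yrm ymn yrmn)
     *m (Zm R N ^+ c *t (1%:M : 'M[R[i]]_N))
     *m ((1%:M : 'M[R[i]]_N) *t invmx (Zm R N ^+ a))).
Proof.
move=> yrm ymn yrmn _.
have N0 : (0 < N)%N by apply: leq_trans N3.
rewrite (invY _ oddN N0) !(invZ _ N0).
apply/matrixP => k l.
rewrite [RHS]mxE (mono_r _ (T5_r _ _)) (mono_r _ (T4_r _ N0 c)) -mulmxA.
rewrite (mono_l _ (T1_l _ N0 _)) (mono_l _ (T2_l _ _)) !mxE !mxtens_indexK.
move: (mxtens_unindex k) (mxtens_unindex l) => [k1 k2] [l1 l2] /=.
have eA : (a%:Z = ii a) by []. have eC : (c%:Z = ii c) by [].
rewrite eA eC.
set al := ii k1; set be := ii k2; set ga := ii l1; set de := ii l2.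
set A := ii a; set Cc := ii c.
rewrite /Rarr_ac /Rarr /omf2.
have eD : ga - A + de - (be - A) = ga + de - be by ring.
rewrite eD ii_ordz modzE'.
set q := ((al + A) %/ N%:Z)%Z.
set X := al + A - q * N%:Z.
rewrite (@omf_per R N _ _ _ (ga - X) (ga - A - al)); last first.
  by apply/dvdzP; exists q; rewrite /X; ring.
rewrite !whalfE.
set P := (yrm * ymn) ^+ Phalf N.
set H := hfun _ _ _.
set O := omf _ _ _ _ _.
set D := delta _ _ _.
set h := ((Phalf N).+1)%:Z.
have Nh : N%:Z = 2 * h - 1 by rewrite /h N_h.
transitivity (P * H * O * D * (wpow R N (Cc * (ga - al)) * wpow R N (- (A * Cc) * h)
   * wpow R N (al * de) * wpow R N (al ^+ 2 * h))); first by ring.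
transitivity (P * H * O * D * (wpow R N (A * Cc * h) * wpow R N (- (A * al))
   * wpow R N (- (A * A) * h) * wpow R N (- (X * Cc)) * wpow R N (X * de)
   * wpow R N (X ^+ 2 * h) * wpow R N (ga * Cc) * wpow R N (- (de * A)))); last by ring.
congr (_ * _); rewrite !(wpowD _ N0); apply: (wpow_periodic _ N0); apply/dvdzP.
exists (- (A * Cc + A * al) - (q * Cc - q * de - 2 * (al + A) * q * h + q * q * N%:Z * h)).
rewrite /X Nh; ring.
Qed.
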